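(* Fix $0<\delta<1$, and let $\epsilon=\frac12+\frac\delta2$, $\epsilon'=\frac12$, $c=\frac{4}{\epsilon-\epsilon'}=\frac{8}{\delta}$. For every even $n$, let $\mathcal M_n\subseteq\mathcal G_n$ be any subset with $|\mathcal M_n|\le 2^{\sqrt n}$ (and $\mathcal M_n=\emptyset$ for odd $n$). Then the hereditary closure of $\bigcup_{n\in\mathbb N}\mathcal M_n$ has at most factorial speed of growth, i.e. it contains at most $2^{O(n\log n)}$ graphs on vertex set $[n]$.
   Context: For even $n$, a good graph on $n$ vertices is a bipartite graph with vertex set $[n]$ and parts $\{1,\dots,\frac n2\}$ and $\{\frac n2+1,\dots,n\}$, having exactly $\lfloor(\frac n2)^{2-\epsilon}\rfloor$ edges, such that every induced subgraph with at most $(\frac n2)^{\epsilon'}$ vertices has a vertex of degree less than $c$ (within that subgraph). $\mathcal G_n$ denotes the set of good graphs on $n$ vertices (with $\epsilon,\epsilon',c$ as in the claim). The hereditary closure of a family $\mathcal M$ is the set of all graphs (on vertex sets $[k]$) isomorphic to an induced subgraph of some graph in $\mathcal M$. A family has at most factorial speed if the number of its members with vertex set $[n]$ is $2^{O(n\log n)}$. *)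

(* Defs.v *)
From mathcomp Require Import all_boot.
From Stdlib Require Import Reals ClassicalEpsilon.

Set Implicit Arguments.
Unset Strict Implicit.
Unset Printing Implicit Defensive.

(* A graph on vertex set [n] (represented by 'I_n = {0,...,n-1}) is given by
   its set of ordered adjacent pairs, required to be symmetric and irreflexive. *)
Definition graph (n : nat) := {set 'I_n * 'I_n}.

Definition is_graph (n : nat) (E : graph n) : bool :=
  [forall x : 'I_n, forall y : 'I_n, ((x, y) \in E) == ((y, x) \in E)]
  && [forall x : 'I_n, (x, x) \notin E].

Definition nedges (n : nat) (E : graph n) : nat :=
  #|[set p in E | (p.1 < p.2)%N]|.

Definition deg_in (n : nat) (E : graph n) (S : {set 'I_n}) (x : 'I_n) : nat :=
  #|[set y in S | (x, y) \in E]|.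

(* real power x^y for x >= 0, with 0^y = 0 *)
Definition rpow (x y : R) : R :=
  if Req_EM_T x 0 then 0%R else Rpower x y.

(* good graphs: vertex i (0-based) lies in the first part iff i < n/2 *)
Definition good (eps eps' c : R) (n : nat) (E : graph n) : Prop :=
  is_graph E /\
  (forall x y : 'I_n, (x, y) \in E -> (x < n./2)%N != (y < n./2)%N) /\
  (* exactly floor((n/2)^(2-eps)) edges *)
  (INR (nedges E) <= rpow (INR n / 2) (2 - eps) < INR (nedges E) + 1)%R /\
  (forall S : {set 'I_n}, (0 < #|S|)%N ->
     (INR #|S| <= rpow (INR n / 2) eps')%R ->
     exists2 x, x \in S & (INR (deg_in E S x) < c)%R).

Definition pbool (P : Prop) : bool :=
  if excluded_middle_informative P then true else false.

Definition in_hered_closure (M : forall m : nat, {set graph m})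
  (k : nat) (H : graph k) : Prop :=
  is_graph H /\
  exists m : nat, exists2 G : graph m, G \in M m &
    exists f : 'I_k -> 'I_m, injective f /\
      forall x y : 'I_k, ((x, y) \in H) = ((f x, f y) \in G).

Definition count_closure (M : forall m : nat, {set graph m}) (n : nat) : nat :=
  #|[set H : graph n | pbool (in_hered_closure M H)]|.

(* Main.v *)
Require Import Defs.
From mathcomp Require Import all_boot.
From Stdlib Require Import Reals.
From mathcomp Require Import zify.
From Stdlib Require Import Lra Psatz ClassicalEpsilon.
Set Implicit Arguments. Unset Strict Implicit.

Lemma leq_expr m n e : m <= n -> expn m e <= expn n e.
Proof. move=> h; elim: e => [|e IH]; rewrite ?expn0 // !expnS; exact: leq_mul. Qed.

Definition Fc n (N : {ffun 'I_n -> {set 'I_n}}) : graph n :=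
  [set p | (p.2 \in N p.1) || (p.1 \in N p.2)].

Lemma degen_code n D (H : graph n) : is_graph H ->
  (forall S : {set 'I_n}, 0 < #|S| -> exists2 x, x \in S & deg_in H S x < D) ->
  exists N : {ffun 'I_n -> {set 'I_n}}, (forall x, #|N x| <= D) /\ H = Fc N.
Proof.
move=> /andP[/forallP hs _] hdeg.
have sym a b : ((a, b) \in H) = ((b, a) \in H) by apply/eqP; exact: (forallP (hs a) b).
suff gen : forall k (S : {set 'I_n}), #|S| = k -> exists N : 'I_n -> {set 'I_n},
   [/\ (forall x, #|N x| <= D), (forall x, N x \subset S) &
    (forall x y, x \in S -> y \in S -> ((x, y) \in H) = (y \in N x) || (x \in N y))].
  have [N [h1 _ h3]] := gen _ [set: 'I_n] erefl.
  exists [ffun z => N z]; split; first by move=> x; rewrite ffunE.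
  apply/setP => -[a b]; rewrite inE /= !ffunE; exact: h3.
elim=> [|k IH] S hS.
  exists (fun _ => set0); split; first by move=> x; rewrite cards0.
    by move=> x; exact: sub0set.
  by move=> x y; rewrite (cards0_eq hS) inE.
have : 0 < #|S| by rewrite hS.
move=> /hdeg [x xS dx].
have hS' : #|S :\ x| = k by move: hS; rewrite (cardsD1 x) xS add1n => -[].
have [N' [h1 h2 h3]] := IH _ hS'.
exists (fun z => if z == x then [set y in S | (x, y) \in H] else N' z); split.
- by move=> z; case: ifP => _ //; exact: ltnW.
- move=> z; case: ifP => _.
    by apply/subsetP => y; rewrite inE => /andP[].
  by apply: subset_trans (h2 z) _; exact: subD1set.
- have nx y : x \in N' y = false.
    by apply/negbTE/negP => /(subsetP (h2 y)); rewrite !inE eqxx.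
  move=> a b aS bS.
  case: (eqVneq a x) => [->|ax]; case: (eqVneq b x) => [->|bx].
  + by rewrite inE xS /= orbb.
  + by rewrite nx orbF inE bS.
  + by rewrite nx /= inE aS /= sym.
  + by apply: h3; rewrite !inE ?ax ?bx.
Qed.
Lemma card_small n D : #|[set s : {set 'I_n} | #|s| <= D]| <= expn n.+1 D.
Proof.
pose phi (g : {ffun 'I_D -> option 'I_n}) : {set 'I_n} := [set y | Some y \in codom g].
apply: (@leq_trans #|[set phi g | g in [set: {ffun 'I_D -> option 'I_n}]]|).
  apply: subset_leq_card; apply/subsetP => s; rewrite inE => hs.
  apply/imsetP.
  exists [ffun i : 'I_D => nth None [seq Some y | y <- enum s] i]; first by rewrite inE.
  apply/setP => y; rewrite inE; apply/idP/codomP.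
    move=> ys.
    have hi : index y (enum s) < D.
      by apply: leq_trans hs; rewrite cardE index_mem mem_enum.
    exists (Ordinal hi); rewrite ffunE /= (nth_map y); last by rewrite index_mem mem_enum.
    by rewrite nth_index // mem_enum.
  move=> [i]; rewrite ffunE.
  case: (ltnP i (size (enum s))) => hi.
    by rewrite (nth_map y) // => -[->]; rewrite -mem_enum mem_nth.
  by rewrite nth_default // size_map.
apply: leq_trans (leq_imset_card _ _) _.
by rewrite cardsT card_ffun card_option !card_ord.
Qed.
Lemma numeric n D : 2 <= n ->
  expn (expn n.+1 D) n + 2*n*n * (expn 4 n * expn (2*n*n) n) <= expn n (2 * ((D+6) * n)).
Proof.
move=> hn; rewrite expnM.
have -> : expn n 2 = n * n by rewrite expnS expn1.
set q := n * n.
have q0 : 0 < q by rewrite /q; nia.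
have t1 : expn (expn n.+1 D) n <= expn q ((D+5)*n).
  rewrite -expnM; apply: leq_trans (leq_expr _ (_ : n.+1 <= q)) _; first by rewrite /q; nia.
  by apply: leq_pexp2l => //; nia.
have t2 : 2*n*n * (expn 4 n * expn (2*n*n) n) <= expn q ((D+5)*n).
  have h1 : 2*n*n <= q*q by rewrite /q; nia.
  have h2 : 4 <= q by rewrite /q; nia.
  apply: leq_trans (leq_mul h1 (leq_mul (leq_expr n h2) (leq_expr n h1))) _.
  have -> : q*q * (expn q n * expn (q*q) n) = expn q (n+n+n+2).
    rewrite expnMn !expnD expnS expn1; nia.
  by apply: leq_pexp2l => //; nia.
apply: leq_trans (leq_add t1 t2) _.
apply: (@leq_trans (q * expn q ((D + 5) * n))).
  by rewrite addnn -muln2 mulnC leq_mul2r; apply/orP; right; rewrite /q; nia.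
rewrite -expnS; apply: leq_pexp2l => //; nia.
Qed.

Lemma card_bigcup (T : finType) K (A : 'I_K -> {set T}) :
  #|\bigcup_(i < K) A i| <= \sum_(i < K) #|A i|.
Proof.
apply: (@big_ind2 {set T} nat (fun U s => is_true (#|U| <= s))) => //; first by rewrite cards0.
move=> U1 s1 U2 s2 h1 h2; apply: leq_trans (leq_card_setU _ _).1 _; exact: leq_add.
Qed.

Lemma INR_expn a b : INR (expn a b) = (INR a ^ b)%R.
Proof. elim: b => [|b IH]; first by rewrite expn0. by rewrite expnS mulnE mult_INR IH. Qed.

Definition ind n m (p : graph m * {ffun 'I_n -> 'I_m}) : graph n :=
  [set q : 'I_n * 'I_n | (p.2 q.1, p.2 q.2) \in p.1].


Theorem claim3p1 (delta : R) (hd0 : (0 < delta)%R) (hd1 : (delta < 1)%R)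
  (M : forall m : nat, {set graph m})
  (hodd : forall n : nat, odd n -> M n = set0)
  (hgood : forall n : nat, ~~ odd n -> forall G, G \in M n ->
     good (1/2 + delta/2) (1/2) (4 / ((1/2 + delta/2) - 1/2)) G)
  (hsize : forall n : nat, ~~ odd n ->
     (INR #|M n| <= Rpower 2 (sqrt (INR n)))%R) :
  exists C : R, exists N : nat, forall n : nat, (N <= n)%N ->
    (INR (count_closure M n) <= Rpower 2 (C * INR n * ln (INR n)))%R.
Proof.
have [D hD] := INR_unbounded (4 / ((1/2 + delta/2) - 1/2)).
exists (2 * INR (D+6) / ln 2)%R, 2 => n hn.
have key : count_closure M n <= expn n (2 * ((D+6) * n)).
  apply: leq_trans (numeric D hn).
  set K := 2*n*n.
  pose A := [set s : {set 'I_n} | #|s| <= D].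
  pose Aset := [set Fc N | N in ffun_on (mem A)].
  pose Bset := \bigcup_(i < K) [set @ind n i p | p in setX (M i) [set: {ffun 'I_n -> 'I_i}]].
  have Mb : forall m, m < K -> #|M m| <= expn 4 n.
    move=> m hm; case: (boolP (odd m)) => om; first by rewrite hodd // cards0.
    have h1 := hsize m om.
    have h2 : (Rpower 2 (sqrt (INR m)) <= INR (expn 4 n))%R.
      rewrite INR_expn.
      have -> : (INR 4 ^ n = Rpower 2 (INR (2*n)))%R.
        rewrite Rpower_pow; last lra.
        rewrite mulnE pow_mult; f_equal; simpl; lra.
      apply: Rle_Rpower; first lra.
      rewrite -(sqrt_pow2 (INR (2*n))); last exact: pos_INR.
      apply: sqrt_le_1_alt.
      have hm' : m <= (2*n)*(2*n) by rewrite /K in hm; nia.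
      have := le_INR _ _ (leP hm'); rewrite !mulnE !mult_INR; simpl; nra.
    apply/leP; apply: INR_le; lra.
  have sub : [set H : graph n | pbool (in_hered_closure M H)] \subset Aset :|: Bset.
    apply/subsetP => H; rewrite inE /pbool.
    case: excluded_middle_informative => [[gH [m [G GM [f [finj hf]]]]] _|_ //].
    rewrite inE.
    case: (ltnP m K) => hm.
      apply/orP; right; apply/bigcupP; exists (Ordinal hm) => //.
      apply/imsetP; exists (G, [ffun x => f x]); first by rewrite in_setX GM in_setT.
      by apply/setP => -[a b]; rewrite inE /= !ffunE; exact: hf.
    apply/orP; left.
    have om : ~~ odd m.
      by apply/negP => om; move: GM; rewrite hodd // inE.
    have [_ [_ [_ h4]]] := hgood m om G GM.
    have [N [hN ->]] : exists N : {ffun 'I_n -> {set 'I_n}}, (forall x, #|N x| <= D) /\ H = Fc N.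
      apply: degen_code gH _ => S S0.
      have hS0 : 0 < #|f @: S| by rewrite card_imset.
      have hSle : (INR #|f @: S| <= rpow (INR m / 2) (1/2))%R.
        rewrite card_imset // /rpow.
        have mK := le_INR _ _ (leP hm).
        rewrite /K !mulnE !mult_INR in mK.
        have n2 : (2 <= INR n)%R by apply: (le_INR 2); apply/leP.
        destruct (Req_EM_T _ _) as [e|ne]; first by simpl in mK; nra.
        have -> : (1/2 = /2)%R by lra.
        rewrite Rpower_sqrt; last by simpl in mK; nra.
        apply: (@Rle_trans _ (INR n)).
          apply: le_INR; apply/leP; apply: leq_trans (max_card _) _; by rewrite card_ord.
        rewrite -(sqrt_pow2 (INR n)); last exact: pos_INR.
        apply: sqrt_le_1_alt; simpl in mK |- *; nra.
      have [y /imsetP [x xS ->] hy] := h4 _ hS0 hSle.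
      exists x => //.
      have hlt : deg_in G (f @: S) (f x) < D.
        by apply/ltP; apply: INR_lt; lra.
      apply: (leq_ltn_trans _ hlt).
      rewrite /deg_in -(card_imset _ finj); apply: subset_leq_card.
      apply/subsetP => w /imsetP [z]; rewrite inE => /andP [zS hxz] ->.
      by rewrite inE imset_f //= -hf.
    by apply/imsetP; exists N => //; apply/ffun_onP => x; rewrite inE.
  rewrite /count_closure; apply: leq_trans (subset_leq_card sub) _.
  apply: leq_trans (leq_card_setU _ _).1 _; apply: leq_add.
    apply: leq_trans (leq_imset_card _ _) _.
    rewrite card_ffun_on card_ord; apply: leq_expr; exact: card_small.
  apply: leq_trans (card_bigcup _) _.
  apply: (@leq_trans (\sum_(i < K) (expn 4 n * expn K n))).
    apply: leq_sum => i _; apply: leq_trans (leq_imset_card _ _) _.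
    rewrite cardsX cardsT card_ffun !card_ord; apply: leq_mul; first exact: Mb (ltn_ord i).
    exact/leq_expr/ltnW/ltn_ord.
  by rewrite big_const_ord iter_addn_0 mulnC.
have n0 : (0 < INR n)%R by apply: lt_0_INR; apply/ltP; lia.
apply: Rle_trans (le_INR _ _ (leP key)) _.
rewrite INR_expn -Rpower_pow // /Rpower; apply: Req_le; f_equal.
have l2 := ln_lt_2.
rewrite !mulnE !mult_INR; simpl INR; field; lra.
Qed.
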